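(* Let $k\in\mathbb{N}_0$. (1) If $n=1$, then $\mathtt{m}_{2k}-\mathtt{m}_1^{2k}\in\operatorname{qm}(\emptyset,\emptyset)$. (2) For any $n\in\mathbb{N}$ and $i_1,\dots,i_n\in\mathbb{N}_0$, $\mathtt{m}_{2ki_1,\dots,2ki_n}-\mathtt{m}_{i_1,\dots,i_n}^{2k}\in\operatorname{qm}(\emptyset,\emptyset)$.
   Context: Let $\mathbb{R}[\underline x]=\mathbb{R}[x_1,\dots,x_n]$, $\mathscr{M}=\mathbb{R}[\mathtt{m}_{i_1,\dots,i_n}\colon (i_1,\dots,i_n)\in\mathbb{N}_0^n]$ the polynomial ring in countably many indeterminates with $\mathtt{m}_{0,\dots,0}:=1$ (for $n=1$ these are $\mathtt{m}_i$, $i\in\mathbb{N}_0$), $\mathscr{M}[\underline x]=\mathscr{M}\otimes_{\mathbb{R}}\mathbb{R}[\underline x]$, and $\mathtt{m}:\mathscr{M}[\underline x]\to\mathscr{M}$ the unique $\mathscr{M}$-linear map with $\mathtt{m}(x_1^{i_1}\cdots x_n^{i_n})=\mathtt{m}_{i_1,\dots,i_n}$. $\operatorname{qm}(\emptyset,\emptyset)$ is the quadratic module of $\mathscr{M}$ generated by $\{\mathtt{m}(f^2)\colon f\in\mathscr{M}[\underline x]\}$, i.e. the smallest subset of $\mathscr{M}$ containing $1$ and these elements and closed under addition and under multiplication by squares of elements of $\mathscr{M}$. *)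

(* Defs.v *)
From HB Require Import structures.
From mathcomp Require Import all_boot all_order all_algebra.
From mathcomp Require Import finmap.
From mathcomp.multinomials Require Import monalg.

Set Implicit Arguments.
Unset Strict Implicit.
Unset Printing Implicit Defensive.

Import Order.TTheory GRing.Theory Num.Theory.
Local Open Scope ring_scope.

Definition midx (n : nat) := {ffun 'I_n -> nat}.

(* The nonzero multi-indices: they index the indeterminates of the moment ring
   (m_{0,...,0} is not an indeterminate, it is set equal to 1). *)
Definition nzidx (n : nat) := {a : midx n | a != [ffun => 0%N]}.

(* The moment ring  M = R[ m_a : a in N_0^n \ {0} ]  (countably many indeterminates). *)
Definition Mring (R : realFieldType) (n : nat) := {malg R[cmonom (nzidx n)]}.

Definition mvar (R : realFieldType) (n : nat) (a : midx n) : Mring R n :=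
  match insub a with
  | Some b => << ucm b >>
  | None => 1
  end.

Definition Mx (R : realFieldType) (n : nat) := {malg (Mring R n)[cmonom 'I_n]}.

Definition expo (n : nat) (a : cmonom 'I_n) : midx n := [ffun i => a i].

Definition mmap (R : realFieldType) (n : nat) (f : Mx R n) : Mring R n :=
  \sum_(a <- msupp f) f@_a * mvar R (expo a).

Inductive qm0 (R : realFieldType) (n : nat) : Mring R n -> Prop :=
| qm0_one : qm0 1
| qm0_gen (f : Mx R n) : qm0 (mmap (f * f))
| qm0_add (a b : Mring R n) : qm0 a -> qm0 b -> qm0 (a + b)
| qm0_sqmul (s a : Mring R n) : qm0 a -> qm0 (s * s * a).

Definition m1 (R : realFieldType) (i : nat) : Mring R 1 := mvar R [ffun => i].

(* Main.v *)
Require Import Defs.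
From HB Require Import structures.
From mathcomp Require Import all_boot all_order all_algebra.
From mathcomp Require Import finmap.
From mathcomp.multinomials Require Import monalg.
From mathcomp Require Import ring zify.
Import GRing.Theory.
Local Open Scope ring_scope.
Set Implicit Arguments.


Definition fsa n (a : midx n) : {fsfun of _ : 'I_n => 0%N} := [fsfun j in ([fset j | j in enum 'I_n])%fset => a j | 0%N].
Definition mono n (a : midx n) : cmonom 'I_n := locked (mkcmonom (fsa a)).
Lemma monoE n (a : midx n) j : mono a j = a j.
Proof.
rewrite /mono -lock cmE /= /fsa fsfun_fun.
by have -> : j \in ([fset j | j in enum 'I_n])%fset by apply/imfsetP; exists j; rewrite ?mem_enum.
Qed.

Fixpoint Gs (T : comNzRingType) (t s : T) (K : nat) : T :=
  match K with 0%N => 0 | K'.+1 => t * t * Gs T t s K' + K'.+1%:R * s ^+ (2 * K') end.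

Lemma key (T : comNzRingType) (t s : T) (K : nat) :
  t ^+ (2 * K.+1) - s ^+ (2 * K.+1) - (2 * K.+1)%:R * s ^+ (2 * K).+1 * (t - s)
  = (t * t - s * s) * (t * t - s * s) * Gs T t s K + K.+1%:R * s ^+ (2 * K) * ((t - s) * (t - s)).
Proof.
elim: K => [|K IH] /=; first by rewrite muln0 expr0; ring.
have E : forall (x : T) j, x ^+ (2 * K + j) = x ^+ (2 * K) * x ^+ j.
  by move=> x j; rewrite -exprD.
have e1 : (2 * K.+2 = 2 * K + 4)%N by lia.
have e2 : ((2 * K.+1).+1 = 2 * K + 3)%N by lia.
have e3 : (2 * K.+1 = 2 * K + 2)%N by lia.
have e4 : ((2 * K).+1 = 2 * K + 1)%N by lia.
rewrite e1 e2 e3 E E E E.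
rewrite e3 e4 E E E in IH.
move: IH; move: (Gs T t s K) (s ^+ (2*K)) (t ^+ (2*K)) => G S U IH.
have HG : (t * t - s * s) * (t * t - s * s) * G = U * t ^+ 2 - S * s ^+ 2 - (2 * K + 2)%:R * (S * s ^+ 1) * (t - s) - K.+1%:R * S * ((t - s) * (t - s)).
  by rewrite IH addrK.
have -> : (t * t - s * s) * (t * t - s * s) * (t * t * G + K.+1%:R * S) = t * t * ((t * t - s * s) * (t * t - s * s) * G) + (t * t - s * s) * (t * t - s * s) * K.+1%:R * S by ring.
rewrite HG; ring.
Qed.

Section M.
Variables (R : realFieldType) (n : nat).

Definition X (a : midx n) : Mx R n := << mono a >>.

Lemma XM a b : X a * X b = X [ffun j => (a j + b j)%N].
Proof.
rewrite /X malgM_def fgmulUU.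
have -> : mmul (mono a) (mono b) = mono [ffun j => (a j + b j)%N].
  by apply/eqP/cmP => j; rewrite cmM !monoE ffunE.
by rewrite (mulr1 (1 : Mring R n)).
Qed.

Lemma mono0 : mono [ffun => 0%N] = (mone : cmonom 'I_n).
Proof. by apply/eqP/cmP => j; rewrite cm1 monoE ffunE. Qed.

Lemma X0 : X [ffun => 0%N] = 1.
Proof. rewrite /X mono0. exact: mpolyC1E. Qed.

Lemma XX a p : X a ^+ p = X [ffun j => (p * a j)%N].
Proof.
elim: p => [|p IH]; first by rewrite expr0 -X0; congr X; apply/ffunP => j; rewrite !ffunE.
rewrite exprS IH XM; congr X; apply/ffunP => j; rewrite !ffunE; lia.
Qed.

Lemma mmapE' (f : Mx R n) : Defs.mmap f = monalg.mmap (idfun : Mring R n -> Mring R n) (fun a => mvar R (expo a)) f.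
Proof. by []. Qed.

Lemma mvar0 : mvar R [ffun => 0%N] = 1 :> Mring R n.
Proof. by rewrite /mvar insubF // eqxx. Qed.

Lemma mmapX a : Defs.mmap (X a) = mvar R a.
Proof.
rewrite mmapE' /X mmapU /= mul1r; congr mvar.
by apply/ffunP => j; rewrite ffunE monoE.
Qed.

Lemma mmap_C c : Defs.mmap (c%:MP : Mx R n) = c.
Proof.
rewrite mmapE' mmapU /=; have -> : expo (mone : cmonom 'I_n) = [ffun => 0%N].
  by apply/ffunP => j; rewrite !ffunE cm1.
by rewrite mvar0 mulr1.
Qed.

Lemma mmapCM c (g : Mx R n) : Defs.mmap ((c%:MP : Mx R n) * g) = c * Defs.mmap g.
Proof.
rewrite !mmapE' mul_malgC (mmapEw (msuppZ_le _ _)) mmapE big_distrr /=.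
by apply: eq_bigr => k _; rewrite mcoeffZ mulrA.
Qed.

Lemma mmapD' (f g : Mx R n) : Defs.mmap (f + g) = Defs.mmap f + Defs.mmap g.
Proof. by rewrite !mmapE' mmapD. Qed.
Lemma mmapB' (f g : Mx R n) : Defs.mmap (f - g) = Defs.mmap f - Defs.mmap g.
Proof. by rewrite !mmapE' mmapB. Qed.


Inductive sos : Mx R n -> Prop :=
| sos_sq (f : Mx R n) : sos (f * f)
| sos_add p q : sos p -> sos q -> sos (p + q).

Lemma sos0 : sos 0.
Proof. by rewrite -(mulr0 (0 : Mx R n)); apply: sos_sq. Qed.

Lemma sos_mul g p : sos p -> sos (g * g * p).
Proof.
elim=> [f|p1 q1 _ H1 _ H2].
  by rewrite (_ : g * g * (f * f) = (g * f) * (g * f)); [apply: sos_sq | ring].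
by rewrite mulrDr; apply: sos_add.
Qed.

Lemma sos_nat p m : sos p -> sos (p *+ m).
Proof.
move=> H; elim: m => [|m IH]; first by rewrite mulr0n; apply: sos0.
by rewrite mulrS; apply: sos_add.
Qed.

Lemma sosG (t s : Mx R n) K : sos (Gs _ t s K).
Proof.
elim: K => [|K IH] /=; first exact: sos0.
apply: sos_add; first exact: sos_mul.
rewrite (_ : K.+1%:R * s ^+ (2 * K) = (s ^+ K * s ^+ K) *+ K.+1).
  by apply: sos_nat; apply: sos_sq.
by rewrite -exprD mulr_natl; congr (_ ^+ _ *+ _); lia.
Qed.

Lemma sos_qm p : sos p -> qm0 (Defs.mmap p).
Proof.
elim=> [f|p1 q1 _ H1 _ H2]; first exact: qm0_gen.
by rewrite mmapD'; apply: qm0_add.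
Qed.

End M.


Lemma aux2 (T : comNzRingType) (u v : T) K : K.+1%:R * u ^+ (2 * K) * (v * v) = (u ^+ K * v) * (u ^+ K * v) *+ K.+1.
Proof. rewrite -mulr_natl (_ : 2 * K = K + K)%N; last by lia. rewrite exprD; ring. Qed.

Lemma Cpow (R : realFieldType) n (c : Mring R n) p : (c%:MP : Mx R n) ^+ p = (c ^+ p)%:MP.
Proof.
elim: p => [|p IH]; first by rewrite !expr0 mpolyC1E.
by rewrite !exprS IH mpolyCM.
Qed.


Lemma final (R : realFieldType) n (y : Mx R n) (c : Mring R n) (a : nat -> Mring R n)
  (Hy : forall p, Defs.mmap (y ^+ p) = a p) (H1 : a 1%N = c) K :
  qm0 (a (2 * K.+1)%N - c ^+ (2 * K.+1)).
Proof.
have H : y ^+ (2 * K.+1) - c%:MP ^+ (2 * K.+1) - (2 * K.+1)%:R * c%:MP ^+ (2 * K).+1 * (y - c%:MP) = (y * y - c%:MP * c%:MP) * (y * y - c%:MP * c%:MP) * Gs _ y c%:MP K + K.+1%:R * c%:MP ^+ (2 * K) * ((y - c%:MP) * (y - c%:MP)) := key _ y c%:MP K.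
have S : sos ((y * y - c%:MP * c%:MP) * (y * y - c%:MP * c%:MP) * Gs _ y c%:MP K +
    K.+1%:R * c%:MP ^+ (2 * K) * ((y - c%:MP) * (y - c%:MP))).
  apply: sos_add; first by apply: sos_mul; apply: sosG.
  rewrite aux2.
  by apply: sos_nat; apply: sos_sq.
have Q := sos_qm S.
rewrite -H in Q.
rewrite !mmapB' in Q.
have ey : Defs.mmap y = c := etrans (Hy 1%N) H1.
have e2 : Defs.mmap (c%:MP ^+ (2 * K.+1)) = c ^+ (2 * K.+1).
  exact: (etrans (congr1 (@Defs.mmap R n) (Cpow c _)) (mmap_C _)).
have e3 : Defs.mmap ((2 * K.+1)%:R * c%:MP ^+ (2 * K).+1 * (y - c%:MP)) = 0.
  rewrite Cpow -mpolyC_nat -mpolyCM mmapCM mmapB'.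
  by rewrite ey mmap_C subrr mulr0.
have E : Defs.mmap (y ^+ (2 * K.+1)) - Defs.mmap (c%:MP ^+ (2 * K.+1)) -
       Defs.mmap ((2 * K.+1)%:R * c%:MP ^+ (2 * K).+1 * (y - c%:MP)) = a (2 * K.+1)%N - c ^+ (2 * K.+1).
  exact: (etrans (congr2 (fun u v => u - v) (congr2 (fun u v => u - v) (Hy _) e2) e3) (subr0 _)).
exact: (eq_ind _ (@qm0 R n) Q _ E).
Qed.

Lemma main_n (R : realFieldType) n (i : midx n) (k : nat) :
  qm0 (mvar R [ffun j => (2 * k * i j)%N] - mvar R i ^+ (2 * k)).
Proof.
case: k => [|K].
  rewrite (_ : mvar R [ffun j => (2 * 0 * i j)%N] = 1).
    rewrite muln0 expr0 subrr -(mulr0 (0 : Mring R n)) -(mulr1 (0 * 0)).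
    by apply: qm0_sqmul; apply: qm0_one.
  rewrite -mvar0; congr mvar; apply/ffunP => j; rewrite !ffunE; lia.
apply: (@final R n (X R i) (mvar R i) (fun p => mvar R [ffun j => (p * i j)%N])).
  by move=> p; rewrite XX mmapX.
by congr mvar; apply/ffunP => j; rewrite ffunE mul1n.
Qed.

Unset Implicit Arguments.

Theorem lemma2p2 (R : realFieldType) (k : nat) :
  qm0 (m1 R (2 * k) - m1 R 1 ^+ (2 * k))
  /\ (forall (n : nat) (i : midx n), (0 < n)%N ->
        qm0 (mvar R [ffun j => (2 * k * i j)%N] - mvar R i ^+ (2 * k))).
Proof.
split; last by move=> n i _; apply: main_n.
pose i1 : midx 1 := [ffun => 1%N].
have := main_n R i1 k.
have -> : [ffun j => (2 * k * i1 j)%N] = [ffun => (2 * k)%N] :> midx 1.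
  by apply/ffunP => j; rewrite !ffunE muln1.
by [].
Qed.
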